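(* In the $q$-boson algebra $\mathcal H_n$ with $z=1$ (site indices read modulo $n$, so $\beta_0=\beta_n$, $\beta^*_{n+1}=\beta^*_1$), for every $j=1,\dots,n$ one has the identities of formal power series in $v$ $$Q^-(v)\beta_j-\beta_jQ^-(v)=-v\,\beta_{j-1}\big[Q^-(v)-\beta_jQ^-(v)\beta_j^*\big],$$ $$Q^-(v)\beta_j^*-\beta_j^*Q^-(v)=v\big[Q^-(v)-\beta_jQ^-(v)\beta_j^*\big]\beta^*_{j+1}.$$
   Context: $q$ is an indeterminate, $n\ge1$. $\mathcal H_n$ is the $\mathbb C(q)$-algebra generated by $\beta_i,\beta_i^*,q^{\pm N_i}$ ($i=1,\dots,n$) with relations: $q^{\pm N_i}$ mutually inverse and commuting, $q^{N_i}\beta_j=q^{-\delta_{ij}}\beta_jq^{N_i}$, $q^{N_i}\beta_j^*=q^{\delta_{ij}}\beta^*_jq^{N_i}$, $\beta_i\beta_j^*-\beta_j^*\beta_i=\delta_{ij}(1-q^2)q^{2N_i}$, $\beta_i\beta_i^*-q^2\beta_i^*\beta_i=1-q^2$, generators at different sites commute. $(q^2)_m=\prod_{j=1}^m(1-q^{2j})$. $Q^-(v)=\sum_{r\ge0}Q^-_rv^r$ with $$Q^-_r=\sum_{\alpha}z^{\alpha_n}\frac{\beta_n^{\alpha_n}(\beta_{n-1}\beta_n^* )^{\alpha_{n-1}}\cdots(\beta_1\beta_2^* )^{\alpha_1}(\beta_1^* )^{\alpha_n}}{(q^2)_{\alpha_1}\cdots(q^2)_{\alpha_n}}\prod_{i=1}^nq^{\alpha_i(\alpha_i+1)},$$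 summed over compositions $\alpha\in\mathbb Z^n_{\ge0}$ of $r$ (here $z=1$). *)

(* Defs.v *)
From mathcomp Require Import all_boot all_order all_algebra all_field.
From mathcomp Require Import complex.
From mathcomp Require Import Rstruct.
Set Implicit Arguments. Unset Strict Implicit. Unset Printing Implicit Defensive.
Import GRing.Theory.
Local Open Scope ring_scope.

Definition CC : fieldType := (Rdefinitions.R)[i].
Definition Kq : fieldType := {fraction {poly CC}}.
Definition qq : Kq := @FracField.tofrac _ 'X.

Definition qpoch (m : nat) : Kq := \prod_(1 <= j < m.+1) (1 - qq ^+ (2 * j)).

Fixpoint comps (n r : nat) : seq (seq nat) :=
  match n with
  | 0 => if r == 0%N then [:: [::]] else [::]
  | n'.+1 => flatten [seq [seq k :: s | s <- comps n' (r - k)] | k <- iota 0 r.+1]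
  end.

Section Qminus.
Variable A : algType Kq.
Variable n : nat.
(* generators beta_i, beta*_i, indexed by sites i = 1..n *)
Variables b bs : nat -> A.

(* term of Q^-_r indexed by the composition alpha = s (alpha_i = nth 0 s (i-1)), z = 1 *)
Definition Qterm (s : seq nat) : A :=
  let a i := nth 0%N s i.-1 in
  (\prod_(k <- s) (qq ^+ (k * k.+1) / qpoch k)) *:
  (b n ^+ a n
   * (\prod_(i <- rev (iota 1 n.-1)) (b i * bs i.+1) ^+ a i)
   * bs 1 ^+ a n).

(* coefficient Q^-_r of v^r in Q^-(v) *)
Definition Qm (r : nat) : A := \sum_(s <- comps n r) Qterm s.

(* coefficient of v^r in a series whose coefficients are given by f, shifted by one
   (i.e. v * F(v)); coefficient 0 of v F(v) is 0 *)
Definition shift1 (f : nat -> A) (r : nat) : A := if r is r'.+1 then f r' else 0.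
End Qminus.

(* The defining relations of the q-boson algebra H_n, for generators
   b i = beta_i, bs i = beta*_i, qN i = q^{N_i}, qNi i = q^{-N_i}, sites i = 1..n. *)
Definition qboson_rel (A : algType Kq) (n : nat) (b bs qN qNi : nat -> A) : Prop :=
  (forall i, (1 <= i <= n)%N -> qN i * qNi i = 1 /\ qNi i * qN i = 1) /\
  [/\
      (forall i j, (1 <= i <= n)%N -> (1 <= j <= n)%N ->
         [/\ qN i * qN j = qN j * qN i, qN i * qNi j = qNi j * qN i
           & qNi i * qNi j = qNi j * qNi i]),
      (forall i j, (1 <= i <= n)%N -> (1 <= j <= n)%N ->
         qN i * b j = (if i == j then qq^-1 else 1) *: (b j * qN i)
         /\ qN i * bs j = (if i == j then qq else 1) *: (bs j * qN i)),
      (forall i j, (1 <= i <= n)%N -> (1 <= j <= n)%N ->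
         b i * bs j - bs j * b i = (if i == j then (1 - qq ^+ 2) *: (qN i ^+ 2) else 0)),
      (forall i, (1 <= i <= n)%N -> b i * bs i - qq ^+ 2 *: (bs i * b i) = (1 - qq ^+ 2)%:A)
    & (forall i j, (1 <= i <= n)%N -> (1 <= j <= n)%N -> i != j ->
         forall x y, x \in [:: b i; bs i; qN i; qNi i] -> y \in [:: b j; bs j; qN j; qNi j] ->
         x * y = y * x)].

(* Main.v *)
Require Import Defs.
From mathcomp Require Import all_boot all_order all_algebra all_field.
From mathcomp Require Import zify.
Import GRing.Theory.
Local Open Scope ring_scope.

Lemma qX_neq1 k : (0 < k)%N -> qq ^+ k != 1.
Proof.
move=> k0; rewrite /qq -tofracXn -(tofrac1 _) tofrac_eq.
apply/eqP => h; have := congr1 (fun p : {poly CC} => size p) h; rewrite size_polyXn size_poly1.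
by move=> /= [e]; rewrite e in k0.
Qed.

Lemma qpochS m : qpoch m.+1 = qpoch m * (1 - qq ^+ (2 * m.+1)).
Proof. by rewrite /qpoch big_nat_recr. Qed.

Lemma qpoch_neq0 m : qpoch m != 0.
Proof.
rewrite /qpoch big_nat_cond prodf_seq_neq0; apply/allP => i _; apply/implyP.
move=> /andP [/andP [i1 _] _].
rewrite subr_eq0 eq_sym qX_neq1 //; by rewrite muln_gt0.
Qed.

Definition cterm (k : nat) : Kq := qq ^+ (k * k.+1) / qpoch k.

Lemma field_aux (F : fieldType) (a b p u : F) : u != 0 -> a * b / (p * u) * u = a / p * b.
Proof. by move=> u0; rewrite invfM -!mulrA mulVf // mulr1 [b * _]mulrC. Qed.

Lemma ctermS x : cterm x.+1 * (1 - qq ^+ (2 * x.+1)) = cterm x * qq ^+ (2 * x.+1).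
Proof.
rewrite /cterm qpochS.
have u0 : 1 - qq ^+ (2 * x.+1) != 0 by rewrite subr_eq0 eq_sym qX_neq1.
have p0 := qpoch_neq0 x.
rewrite (_ : (x.+1 * x.+2 = x * x.+1 + 2 * x.+1)%N); last first.
  by rewrite -mulnDl addn2 mulnC.
rewrite exprD; exact: (@field_aux Kq _ _ _ _ u0).
Qed.

Definition Cs (s : seq nat) : Kq := \prod_(k <- s) cterm k.

Lemma Cs_incr s p : (p < size s)%N ->
  Cs (incr_nth s p) * (1 - qq ^+ (2 * (nth 0%N s p).+1))
  = Cs s * qq ^+ (2 * (nth 0%N s p).+1).
Proof.
elim: s p => [|x s IH] [|p] //= hp.
  by rewrite /Cs !big_cons -!mulrA [_ * (1 - _)]mulrC [_ * qq ^+ _]mulrC !mulrA ctermS.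
rewrite /Cs !big_cons -/(Cs _) -/(Cs _) -!mulrA IH //.
Qed.

Lemma mem_comps n r s : (s \in comps n r) = (size s == n) && (sumn s == r).
Proof.
elim: n r s => [|n IH] r s.
  by case: r => [|r]; case: s => [|x s] //=; rewrite ?inE.
apply/(allpairsPdep (f:=fun k (t:seq nat) => k :: t) (t:=fun k => comps n (r-k)))/idP.
  move=> [k [t [hk ht ->]]]; rewrite mem_iota in hk; rewrite IH in ht.
  case/andP: ht => /eqP hs /eqP hr; rewrite /= hs hr eqxx /=.
  apply/eqP; rewrite subnKC //; by case/andP: hk.
case: s => [|x s] //= /andP [/eqP [hs] /eqP hr].
exists x, s; split => //.
  by rewrite (mem_iota 0 r.+1) /= add0n ltnS -hr leq_addr.
by rewrite IH hs -hr addKn !eqxx.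
Qed.

Lemma uniq_comps n r : uniq (comps n r).
Proof.
elim: n r => [|n IH] r; first by case: r.
apply: (allpairs_uniq_dep (f:=fun k (t:seq nat) => k :: t) (t:=fun k => comps n (r-k))); first exact: iota_uniq.
  by move=> x _; exact: IH.
by move=> [x1 y1] [x2 y2] _ _ /= [-> ->].
Qed.

Lemma sumn_incr s p : sumn (incr_nth s p) = (sumn s).+1.
Proof.
elim: s p => [|x s IH] [|p] //=; first by elim: p => //= p ->.
by rewrite IH addnS.
Qed.

Lemma nth_le_sumn s p : (nth 0%N s p <= sumn s)%N.
Proof.
elim: s p => [|x s IH] [|p] //=; first exact: leq_addr.
exact: leq_trans (IH p) (leq_addl _ _).
Qed.

Lemma comps_perm n r p : (p < n)%N ->
  perm_eq [seq s <- comps n r.+1 | (0 < nth 0%N s p)%N]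
          [seq incr_nth s p | s <- comps n r].
Proof.
move=> pn; apply: uniq_perm.
- by rewrite filter_uniq // uniq_comps.
- rewrite map_inj_in_uniq ?uniq_comps // => s1 s2.
  rewrite !mem_comps => /andP[/eqP h1 _] /andP[/eqP h2 _] e.
  apply: (@eq_from_nth _ 0%N); first by rewrite h1 h2.
  move=> k _; have := congr1 (fun v => nth 0%N v k) e.
  by rewrite /= !nth_incr_nth => /eqP; rewrite eqn_add2l => /eqP.
move=> t; rewrite mem_filter mem_comps; apply/idP/mapP.
  case/andP => tp /andP [/eqP ht /eqP hs].
  set s := mkseq (fun k => nth 0%N t k - (p == k))%N n.
  have e : t = incr_nth s p.
    apply: (@eq_from_nth _ 0%N).
      by rewrite size_incr_nth size_mkseq pn ht.
    move=> k _; rewrite nth_incr_nth.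
    case: (ltnP k n) => kn.
      rewrite nth_mkseq //; case: eqP => [<-|_] /=; last by rewrite subn0.
      by rewrite add1n subn1 prednK.
    rewrite !nth_default ?size_mkseq ?ht //.
    by case: eqP => // e; move: pn; rewrite e ltnNge kn.
  exists s => //; rewrite mem_comps size_mkseq eqxx /=.
  by move: hs; rewrite e sumn_incr => -[->].
case=> s; rewrite mem_comps => /andP [/eqP hs /eqP hr] ->.
by rewrite nth_incr_nth eqxx size_incr_nth hs pn sumn_incr hr !eqxx.
Qed.
Section Site.
Variables (F : fieldType) (R : algType F) (q : F) (b bs t : R).
Hypotheses (S1 : bs * b = 1 - t) (S2 : b * bs = 1 - q ^+ 2 *: t)
  (S3 : t * bs = q ^+ 2 *: (bs * t)) (S4 : b * t = q ^+ 2 *: (t * b)).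

Lemma qexpS m : q ^+ (2 * m.+2) = q ^+ (2 * m.+1) * q ^+ 2.
Proof. by rewrite -exprD mulnS addnC. Qed.

Lemma M1 m : b * bs ^+ m.+1 = bs ^+ m * (1 - q ^+ (2 * m.+1) *: t).
Proof.
elim: m => [|m IH]; first by rewrite expr1 expr0 mul1r S2.
rewrite exprSr mulrA IH -mulrA mulrBl mul1r -scalerAl S3 scalerA -qexpS.
by rewrite scalerAr exprSr -mulrA; congr (_ * _); rewrite mulrBr mulr1.
Qed.

Lemma M2 a : b ^+ a.+1 * bs = (1 - q ^+ (2 * a.+1) *: t) * b ^+ a.
Proof.
elim: a => [|a IH]; first by rewrite expr1 expr0 mulr1 S2.
rewrite exprS -mulrA IH mulrA mulrBr mulr1 -scalerAr S4 scalerA -qexpS.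
by rewrite scalerAl exprS mulrA; congr (_ * _); rewrite mulrBl mul1r.
Qed.

Lemma T1 A1 x :
  b ^+ A1 * bs ^+ x.+1 * b - b * (b ^+ A1 * bs ^+ x.+1)
  = - ((1 - q ^+ (2 * x.+1)) *: (b ^+ A1 * (bs ^+ x * t))).
Proof.
have cb : GRing.comm b (b ^+ A1) by apply: commrX.
have -> : b * (b ^+ A1 * bs ^+ x.+1) = b ^+ A1 * (b * bs ^+ x.+1) by rewrite mulrA cb -mulrA.
rewrite -mulrA -mulrBr [in RHS]scalerAr -[in RHS]mulrN; congr (_ * _).
rewrite M1 exprSr -mulrA S1 -mulrBr [in RHS]scalerAr -[in RHS]mulrN; congr (_ * _).
by rewrite scalerBl scale1r !opprB addrC addrA subrK.
Qed.

Lemma T1' A1 x :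
  b ^+ A1 * bs ^+ x - b * (b ^+ A1 * bs ^+ x) * bs
  = q ^+ (2 * x.+1) *: (b ^+ A1 * (bs ^+ x * t)).
Proof.
have cb : GRing.comm b (b ^+ A1) by apply: commrX.
have -> : b * (b ^+ A1 * bs ^+ x) * bs = b ^+ A1 * (b * bs ^+ x.+1).
  by rewrite mulrA cb -!mulrA exprSr.
rewrite -mulrBr scalerAr; congr (_ * _).
by rewrite M1 mulrBr mulr1 opprB addrC subrK scalerAr.
Qed.

Lemma T2 x y :
  b ^+ x.+1 * bs ^+ y * bs - bs * (b ^+ x.+1 * bs ^+ y)
  = (1 - q ^+ (2 * x.+1)) *: (t * b ^+ x * bs ^+ y).
Proof.
have cb : GRing.comm bs (bs ^+ y) by apply: commrX.
have -> : b ^+ x.+1 * bs ^+ y * bs = b ^+ x.+1 * bs * bs ^+ y by rewrite -!mulrA cb.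
rewrite mulrA -mulrBl !scalerAl; congr (_ * _).
rewrite M2 exprS mulrA S1 -mulrBl; congr (_ * _).
by rewrite scalerBl scale1r opprB addrC addrA subrK.
Qed.

Lemma T2' x y :
  b ^+ x * bs ^+ y - b * (b ^+ x * bs ^+ y) * bs
  = q ^+ (2 * x.+1) *: (t * b ^+ x * bs ^+ y).
Proof.
have cb : GRing.comm bs (bs ^+ y) by apply: commrX.
have -> : b * (b ^+ x * bs ^+ y) * bs = b ^+ x.+1 * bs * bs ^+ y.
  by rewrite -!mulrA cb !mulrA -exprS.
rewrite -mulrBl !scalerAl; congr (_ * _).
by rewrite M2 mulrBl mul1r opprB addrC subrK.
Qed.
End Site.

Section Core.
Variables (F : fieldType) (R : algType F).

Lemma core1 (Bj Bsj Bm Fm Fm' G G' Rr Z : R) (c1 c2 k : F) :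
  GRing.comm Bj Fm -> GRing.comm Bj Fm' -> GRing.comm Bj Rr -> GRing.comm Bsj Rr ->
  Bm * Fm' = Fm ->
  G * Bj - Bj * G = - ((1 - k) *: Z) -> G' - Bj * G' * Bsj = k *: Z ->
  c1 * (1 - k) = c2 * k ->
  c1 *: (Fm * (G * Rr) * Bj - Bj * (Fm * (G * Rr)))
  = - (Bm * (c2 *: (Fm' * (G' * Rr)) - Bj * (c2 *: (Fm' * (G' * Rr))) * Bsj)).
Proof.
move=> hFm hFm' hRr hsRr hm hG hG' hc.
have e1 : Fm * (G * Rr) * Bj - Bj * (Fm * (G * Rr)) = Fm * ((G * Bj - Bj * G) * Rr).
  rewrite [in RHS]mulrBl mulrBr; congr (_ - _); first by rewrite -!mulrA hRr.
  by rewrite !mulrA hFm.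
have e2 : Bj * (c2 *: (Fm' * (G' * Rr))) * Bsj = c2 *: (Fm' * ((Bj * G' * Bsj) * Rr)).
  rewrite -scalerAr -scalerAl; congr (_ *: _).
  by rewrite -!mulrA hsRr !mulrA hFm'.
rewrite e1 e2 -scalerBr -mulrBr -mulrBl hG hG'.
rewrite mulNr -!scalerAl mulrN -!scalerAr [Bm * _]mulrA hm scalerN !scalerA.
by rewrite hc.
Qed.

Lemma core2 (Bj Bsj Bsp Rr G G' H H' Z : R) (c1 c2 k : F) :
  GRing.comm Bsj Rr -> GRing.comm Bsj H -> GRing.comm Bj Rr -> GRing.comm Bsj H' ->
  H' * Bsp = H ->
  G * Bsj - Bsj * G = (1 - k) *: Z -> G' - Bj * G' * Bsj = k *: Z ->
  c1 * (1 - k) = c2 * k ->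
  c1 *: (Rr * (G * H) * Bsj - Bsj * (Rr * (G * H)))
  = (c2 *: (Rr * (G' * H')) - Bj * (c2 *: (Rr * (G' * H'))) * Bsj) * Bsp.
Proof.
move=> hsRr hsH hRr hsH' hm hG hG' hc.
have e1 : Rr * (G * H) * Bsj - Bsj * (Rr * (G * H)) = Rr * ((G * Bsj - Bsj * G) * H).
  rewrite [in RHS]mulrBl mulrBr; congr (_ - _); first by rewrite -!mulrA hsH.
  by rewrite !mulrA hsRr.
have e2 : Bj * (c2 *: (Rr * (G' * H'))) * Bsj = c2 *: (Rr * ((Bj * G' * Bsj) * H')).
  rewrite -scalerAr -scalerAl; congr (_ *: _).
  by rewrite -!mulrA hsH' !mulrA hRr.
rewrite e1 e2 -scalerBr -mulrBr -mulrBl hG hG'.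
by rewrite -!scalerAl -!scalerAr -!scalerAl -!mulrA hm !scalerA hc.
Qed.
End Core.

Section Prods.
Variable R : pzRingType.

Lemma rev_iotaS M : rev (iota 1 M.+1) = M.+1 :: rev (iota 1 M).
Proof. by rewrite -[M.+1]addn1 iotaD rev_cat /= add1n addn1. Qed.

Lemma regroup (x y : nat -> R) M :
  x M.+1 * (\prod_(i <- rev (iota 1 M)) (y i.+1 * x i)) * y 1%N
  = \prod_(i <- rev (iota 1 M.+1)) (x i * y i).
Proof.
elim: M => [|M IH]; first by rewrite /= big_nil big_seq1 mulr1.
rewrite rev_iotaS big_cons [in RHS]rev_iotaS big_cons -IH.
by rewrite !mulrA.
Qed.

Lemma prod_perm_comm (F : nat -> R) (l1 l2 : seq nat) :
  uniq l1 -> perm_eq l1 l2 ->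
  {in l1 &, forall i k, i != k -> GRing.comm (F i) (F k)} ->
  \prod_(i <- l1) F i = \prod_(i <- l2) F i.
Proof.
elim: l1 l2 => [|x l1 IH] l2 hu hp hc.
  by move: hp; rewrite perm_sym => /perm_nilP ->.
have xl2 : x \in l2 by rewrite -(perm_mem hp) mem_head.
have hu2 : uniq l2 by rewrite -(perm_uniq hp).
case/splitPr: xl2 hp hu2 => p1 p2 hp hu2.
have hp' : perm_eq l1 (p1 ++ p2).
  rewrite -(perm_cons x); apply: (perm_trans hp).
  by rewrite -cat1s perm_catCA.
case/andP: hu => xl1 hu1.
have cx : GRing.comm (F x) (\prod_(i <- p1) F i).
  rewrite big_seq; apply: commr_prod => i ip1; apply: hc.
  - exact: mem_head.
  - by rewrite (perm_mem hp) mem_cat ip1.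
  - apply/eqP => e; move: hu2; rewrite cat_uniq => /and3P [_ /hasPn h _].
    by move: (h x (mem_head _ _)); rewrite e ip1.
rewrite big_cons big_cat big_cons /= mulrA -cx -mulrA -big_cat -(IH _ hu1 hp') //.
by move=> i k il kl; apply: hc; rewrite inE ?il ?kl orbT.
Qed.
End Prods.

Section Derive.
Variables (F : fieldType) (R : algType F).

Lemma zaux (V : zmodType) (x y z : V) : (x - z) - (x - y) = y - z.
Proof. by rewrite opprB addrC addrA subrK. Qed.

Lemma derive_S12 (q : F) (b bs t : R) : 1 - q ^+ 2 != 0 ->
  b * bs - bs * b = (1 - q ^+ 2) *: t ->
  b * bs - q ^+ 2 *: (bs * b) = (1 - q ^+ 2)%:A ->
  bs * b = 1 - t /\ b * bs = 1 - q ^+ 2 *: t.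
Proof.
move=> u0 E1 E2.
have h : (1 - q ^+ 2) *: (bs * b) = (1 - q ^+ 2) *: (1 - t).
  by rewrite scalerBr -E1 -E2 zaux scalerBl scale1r.
have S1 : bs * b = 1 - t.
  have := congr1 (fun v => (1 - q ^+ 2)^-1 *: v) h.
  by rewrite /= !scalerA mulVf // !scale1r.
split => //.
by rewrite -[b * bs](subrK (bs * b)) E1 S1 scalerBl scale1r addrC addrA subrK.
Qed.

Lemma derive_S34 (q : F) (b bs N : R) : q != 0 ->
  N * b = q^-1 *: (b * N) -> N * bs = q *: (bs * N) ->
  N ^+ 2 * bs = q ^+ 2 *: (bs * N ^+ 2) /\ b * N ^+ 2 = q ^+ 2 *: (N ^+ 2 * b).
Proof.
move=> q0 hb hbs.
have hb' : b * N = q *: (N * b) by rewrite hb scalerA mulfV // scale1r.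
split.
  rewrite !expr2 -mulrA hbs -scalerAr [N * (bs * N)]mulrA hbs -scalerAl scalerA.
  by rewrite -mulrA.
rewrite !expr2 [b * (N * N)]mulrA hb' -scalerAl -[N * b * N]mulrA hb' -scalerAr scalerA.
by rewrite mulrA.
Qed.
End Derive.

Section Main.
Variables (A : algType Kq) (n : nat) (b bs qN qNi : nat -> A).
Hypothesis hn : (0 < n)%N.
Hypothesis hrel : qboson_rel n b bs qN qNi.

Definition tq i := qN i ^+ 2.

Lemma qq_neq0 : qq != 0.
Proof. by rewrite /qq tofrac_eq0 polyX_eq0. Qed.

Lemma site_facts i : (1 <= i <= n)%N ->
  [/\ bs i * b i = 1 - tq i, b i * bs i = 1 - qq ^+ 2 *: tq i,
      tq i * bs i = qq ^+ 2 *: (bs i * tq i) & b i * tq i = qq ^+ 2 *: (tq i * b i)].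
Proof.
move=> hi; case: hrel => _ [_ hqb hbbs hbbs2 _].
have [h1 h2] := hqb i i hi hi; rewrite eqxx in h1 h2.
have E1 := hbbs i i hi hi; rewrite eqxx in E1.
have E2 := hbbs2 i hi.
have u0 : (1 - qq ^+ 2 : Kq) != 0 by rewrite subr_eq0 eq_sym qX_neq1.
have [S1 S2] := @derive_S12 Kq A qq (b i) (bs i) (tq i) u0 E1 E2.
have [S3 S4] := @derive_S34 Kq A qq (b i) (bs i) (qN i) qq_neq0 h1 h2.
by split.
Qed.

Lemma comm_site i k x y : (1 <= i <= n)%N -> (1 <= k <= n)%N -> i != k ->
  x \in [:: b i; bs i; qN i; qNi i] -> y \in [:: b k; bs k; qN k; qNi k] ->
  GRing.comm x y.
Proof. move=> hi hk ik hx hy; case: hrel => _ [_ _ _ _ h]; exact: (h i k hi hk ik x y hx hy). Qed.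

Definition aa (s : seq nat) i := nth 0%N s i.-1.
Definition prv i := if i == 1%N then n else i.-1.
Definition fac s i := b i ^+ aa s i * bs i ^+ aa s (prv i).
Definition PP s := \prod_(i <- rev (iota 1 n)) fac s i.

Lemma comm_b_fac s i k : (1 <= i <= n)%N -> (1 <= k <= n)%N -> i != k ->
  GRing.comm (b i) (fac s k) /\ GRing.comm (bs i) (fac s k).
Proof.
move=> hi hk ik; split; apply: commrM; apply: commrX; apply: (@comm_site i k _ _ hi hk ik);
  by rewrite !inE eqxx ?orbT.
Qed.

Lemma comm_fac_fac s i k : (1 <= i <= n)%N -> (1 <= k <= n)%N -> i != k ->
  GRing.comm (fac s i) (fac s k).
Proof.
move=> hi hk ik; apply: commr_sym.
have [c1 c2] := @comm_b_fac s i k hi hk ik.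
by apply: commrM; apply: commrX; apply: commr_sym.
Qed.

Lemma prv_range i : (1 <= i <= n)%N -> (1 <= prv i <= n)%N.
Proof.
move=> /andP [i1 i2]; rewrite /prv; case: eqP => ei; apply/andP; split; lia.
Qed.

Lemma prv_inj i k : (1 <= i <= n)%N -> (1 <= k <= n)%N -> prv i = prv k -> i = k.
Proof.
rewrite /prv => /andP [i1 i2] /andP [k1 k2].
by case: eqP => ei; case: eqP => ek; lia.
Qed.

Lemma prv_neq i : (1 < n)%N -> (1 <= i <= n)%N -> prv i != i.
Proof.
move=> n1 /andP [i1 i2]; rewrite /prv; case: (i =P 1%N) => ei; rewrite -?subn1; lia.
Qed.

Lemma aa_incr s k i : (1 <= k)%N -> (1 <= i)%N ->
  aa (incr_nth s k.-1) i = ((k == i) + aa s i)%N.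
Proof.
by rewrite /aa nth_incr_nth; case: k => [|k] // _; case: i => [|i].
Qed.

Lemma Qterm_eq s : Qterm n b bs s = Cs s *: PP s.
Proof.
rewrite /Qterm /PP; congr (_ *: _).
have [N eN] : exists N, n = N.+1 by exists n.-1; rewrite prednK.
have cs := @comm_site.
rewrite [in iota 1 n.-1]eN [in b n]eN [in nth _ s n.-1]eN /=.
transitivity ((fun i => b i ^+ aa s i) N.+1 *
  (\prod_(i <- rev (iota 1 N)) ((fun i => bs i ^+ aa s (prv i)) i.+1 * (fun i => b i ^+ aa s i) i))
  * (fun i => bs i ^+ aa s (prv i)) 1%N); last first.
  by rewrite (regroup _ (fun i => b i ^+ aa s i) (fun i => bs i ^+ aa s (prv i)) N) [in RHS]eN.
congr (_ * _ * _); last by rewrite /aa /prv eqxx eN.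
apply: eq_big_seq => i; rewrite mem_rev mem_iota => /andP [i1 i2].
have -> : prv i.+1 = i by rewrite /prv; case: i i1 {i2}.
have hc : GRing.comm (b i) (bs i.+1).
  apply: (@cs i i.+1 (b i) (bs i.+1)).
  - apply/andP; split; lia.
  - apply/andP; split; lia.
  - apply/eqP; lia.
  - by rewrite !inE eqxx.
  - by rewrite !inE eqxx orbT.
rewrite exprMn_comm //; apply: commrX; apply: commr_sym; apply: commrX.
exact: commr_sym.
Qed.

Lemma inr i : (i \in rev (iota 1 n)) = (1 <= i <= n)%N.
Proof. by rewrite mem_rev mem_iota add1n ltnS. Qed.

Lemma sum_shift (D E : seq nat -> A) p r : (p < n)%N ->
  (forall s, s \in comps n r -> nth 0%N s p = 0%N -> D s = 0) ->
  (forall s', s' \in comps n r.-1 -> D (incr_nth s' p) = E s') ->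
  \sum_(s <- comps n r) D s = if r is r'.+1 then \sum_(s <- comps n r') E s else 0.
Proof.
move=> pn; case: r => [|r] hz hE.
  apply: big1_seq => s /andP [_ hs]; apply: hz => //.
  have := nth_le_sumn s p; move: hs; rewrite mem_comps => /andP [_ /eqP ->].
  by rewrite leqn0 => /eqP.
rewrite (bigID (fun s => (0 < nth 0%N s p)%N)) /= [X in _ + X]big1_seq ?addr0.
  rewrite -big_filter (perm_big _ (@comps_perm n r p pn)) big_map.
  by apply: eq_big_seq => s hs; exact: hE.
by move=> s /andP [hp hs]; apply: hz => //; move: hp; rewrite lt0n negbK => /eqP.
Qed.

Definition nxt i := if i == n then 1%N else i.+1.

Lemma nxt_range i : (1 <= i <= n)%N -> (1 <= nxt i <= n)%N.
Proof. move=> /andP [i1 i2]; rewrite /nxt; case: (i =P n) => ei; apply/andP; split; lia. Qed.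

Lemma prv_nxt i : (1 <= i <= n)%N -> prv (nxt i) = i.
Proof.
move=> /andP [i1 i2]; rewrite /nxt /prv; case: (i =P n) => ei; case: eqP => e2 //; lia.
Qed.

Lemma nxt_neq i : (1 < n)%N -> (1 <= i <= n)%N -> nxt i != i.
Proof. move=> n1 /andP [i1 i2]; rewrite /nxt; case: (i =P n) => ei; lia. Qed.

Lemma term1_big j s' : (1 < n)%N -> (1 <= j <= n)%N -> size s' = n ->
  Cs (incr_nth s' (prv j).-1) *: (PP (incr_nth s' (prv j).-1) * b j - b j * PP (incr_nth s' (prv j).-1))
  = - (b (prv j) * (Cs s' *: PP s' - b j * (Cs s' *: PP s') * bs j)).
Proof.
move=> n1 hj hs.
set jm := prv j; set s := incr_nth s' jm.-1.
have hjm : (1 <= jm <= n)%N := prv_range _ hj.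
have jmj : jm != j := prv_neq _ n1 hj.
have jjm : j != jm by rewrite eq_sym.
have jm1 : (1 <= jm)%N by case/andP: hjm.
have j1 : (1 <= j)%N by case/andP: hj.
set rest := [seq i <- rev (iota 1 n) | (i != jm) && (i != j)].
have hperm : perm_eq (rev (iota 1 n)) (jm :: j :: rest).
  apply: uniq_perm; first by rewrite rev_uniq iota_uniq.
    rewrite /= inE (negbTE jmj) !mem_filter !eqxx /= andbF /=.
    by rewrite filter_uniq // rev_uniq iota_uniq.
  move=> i; rewrite !inE mem_filter inr.
  case: (i =P jm) => [->|_]; first by rewrite hjm.
  by case: (i =P j) => [->|_] /=; rewrite ?hj ?andbF.
have PPe : forall t, PP t = fac t jm * (fac t j * \prod_(i <- rest) fac t i).
  move=> t; rewrite /PP (@prod_perm_comm _ (fac t) _ (jm :: j :: rest)) ?rev_uniq ?iota_uniq //.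
    by rewrite !big_cons.
  by move=> i k; rewrite !inr => hi hk ik; exact: comm_fac_fac.
have Re : \prod_(i <- rest) fac s i = \prod_(i <- rest) fac s' i.
  apply: eq_big_seq => i; rewrite mem_filter inr => /andP [/andP [ijm ij] hi].
  have i1 : (1 <= i)%N by case/andP: hi.
  have pi1 : (1 <= prv i)%N by case/andP: (prv_range _ hi).
  rewrite /fac /s !aa_incr // [jm == i]eq_sym (negbTE ijm).
  have -> : (jm == prv i) = false.
    by apply/eqP => e; move/eqP: ij; apply; apply: prv_inj.
  by [].
rewrite !PPe Re.
set x := aa s' jm; set A1 := aa s' j; set y := aa s' (prv jm).
have e1 : fac s jm = b jm ^+ x.+1 * bs jm ^+ y.
  rewrite /fac /s !aa_incr ?eqxx //; last by case/andP: (prv_range _ hjm).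
  have -> : (jm == prv jm) = false by rewrite eq_sym; exact: negbTE (prv_neq _ n1 hjm).
  by [].
have e2 : fac s j = b j ^+ A1 * bs j ^+ x.+1.
  by rewrite /fac /s !aa_incr ?eqxx // (negbTE jmj).
have [S1 S2 S3 S4] := site_facts _ hj.
apply: (@core1 Kq A (b j) (bs j) (b jm) (fac s jm) (fac s' jm) (fac s j) (fac s' j)
   _ (b j ^+ A1 * (bs j ^+ x * tq j)) _ _ (qq ^+ (2 * x.+1))).
- exact: (comm_b_fac s _ _ hj hjm jjm).1.
- exact: (comm_b_fac s' _ _ hj hjm jjm).1.
- rewrite big_seq; apply: commr_prod => i; rewrite mem_filter inr => /andP [/andP [_ ij] hi].
  by apply: (comm_b_fac s' _ _ hj hi _).1; rewrite eq_sym.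
- rewrite big_seq; apply: commr_prod => i; rewrite mem_filter inr => /andP [/andP [_ ij] hi].
  by apply: (comm_b_fac s' _ _ hj hi _).2; rewrite eq_sym.
- by rewrite e1 /fac mulrA -exprS.
- by rewrite e2; exact: (@T1 Kq A qq (b j) (bs j) (tq j) S1 S2 S3 A1 x).
- exact: (@T1' Kq A qq (b j) (bs j) (tq j) S2 S3 A1 x).
- rewrite /s; apply: Cs_incr; rewrite hs; case/andP: hjm => h1 h2; lia.
Qed.

Lemma term2_big j s' : (1 < n)%N -> (1 <= j <= n)%N -> size s' = n ->
  Cs (incr_nth s' j.-1) *: (PP (incr_nth s' j.-1) * bs j - bs j * PP (incr_nth s' j.-1))
  = (Cs s' *: PP s' - b j * (Cs s' *: PP s') * bs j) * bs (nxt j).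
Proof.
move=> n1 hj hs.
set jp := nxt j; set s := incr_nth s' j.-1.
have hjp : (1 <= jp <= n)%N := nxt_range _ hj.
have jpj : jp != j := nxt_neq _ n1 hj.
have jjp : j != jp by rewrite eq_sym.
have j1 : (1 <= j)%N by case/andP: hj.
have pjp : prv jp = j := prv_nxt _ hj.
set rest := [seq i <- rev (iota 1 n) | (i != j) && (i != jp)].
have hperm : perm_eq (rev (iota 1 n)) (rest ++ [:: j; jp]).
  apply: uniq_perm; first by rewrite rev_uniq iota_uniq.
    rewrite cat_uniq filter_uniq ?rev_uniq ?iota_uniq //= !mem_filter !inE !eqxx jjp /=.
    by rewrite !andbF.
  move=> i; rewrite mem_cat !inE mem_filter inr.
  case: (i =P j) => [->|_]; first by rewrite hj !orbT.
  by case: (i =P jp) => [->|_] /=; rewrite ?hjp ?andbF ?orbT ?orbF.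
have PPe : forall t, PP t = \prod_(i <- rest) fac t i * (fac t j * fac t jp).
  move=> t; rewrite /PP (@prod_perm_comm _ (fac t) _ (rest ++ [:: j; jp])) ?rev_uniq ?iota_uniq //.
    by rewrite big_cat big_cons big_seq1.
  by move=> i k; rewrite !inr => hi hk ik; exact: comm_fac_fac.
have Re : \prod_(i <- rest) fac s i = \prod_(i <- rest) fac s' i.
  apply: eq_big_seq => i; rewrite mem_filter inr => /andP [/andP [ij ijp] hi].
  have i1 : (1 <= i)%N by case/andP: hi.
  have pi1 : (1 <= prv i)%N by case/andP: (prv_range _ hi).
  rewrite /fac /s !aa_incr // [j == i]eq_sym (negbTE ij).
  have -> : (j == prv i) = false.
    by apply/eqP => e; move/eqP: ijp; apply; apply: prv_inj => //; rewrite pjp.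
  by [].
rewrite !PPe Re.
set x := aa s' j; set y := aa s' (prv j); set w := aa s' jp.
have e1 : fac s j = b j ^+ x.+1 * bs j ^+ y.
  rewrite /fac /s !aa_incr ?eqxx //; last by case/andP: (prv_range _ hj).
  have -> : (j == prv j) = false by rewrite eq_sym; exact: negbTE (prv_neq _ n1 hj).
  by [].
have e2 : fac s jp = b jp ^+ w * bs jp ^+ x.+1.
  have jp1 : (1 <= jp)%N by case/andP: hjp.
  by rewrite /fac /s pjp !aa_incr // (negbTE jjp) eqxx.
have e2' : fac s' jp = b jp ^+ w * bs jp ^+ x by rewrite /fac pjp.
have [S1 S2 S3 S4] := site_facts _ hj.
apply: (@core2 Kq A (b j) (bs j) (bs jp) _ (fac s j) (fac s' j) (fac s jp) (fac s' jp)
   (tq j * b j ^+ x * bs j ^+ y) _ _ (qq ^+ (2 * x.+1))).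
- rewrite big_seq; apply: commr_prod => i; rewrite mem_filter inr => /andP [/andP [ij _] hi].
  by apply: (comm_b_fac s' _ _ hj hi _).2; rewrite eq_sym.
- exact: (comm_b_fac s _ _ hj hjp jjp).2.
- rewrite big_seq; apply: commr_prod => i; rewrite mem_filter inr => /andP [/andP [ij _] hi].
  by apply: (comm_b_fac s' _ _ hj hi _).1; rewrite eq_sym.
- exact: (comm_b_fac s' _ _ hj hjp jjp).2.
- by rewrite e2 e2' -mulrA -exprSr.
- by rewrite e1; exact: (@T2 Kq A qq (b j) (bs j) (tq j) S1 S2 S4 x y).
- exact: (@T2' Kq A qq (b j) (bs j) (tq j) S2 S4 x y).
- rewrite /s; apply: Cs_incr; rewrite hs; case/andP: hj => h1 h2; lia.
Qed.

Lemma PP1 t : n = 1%N -> PP t = b 1 ^+ aa t 1 * bs 1 ^+ aa t 1.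
Proof. by move=> n1; rewrite /PP [in iota _ n]n1 /= big_seq1 /fac /prv eqxx n1. Qed.

Lemma term1_one s' : n = 1%N -> size s' = 1%N ->
  Cs (incr_nth s' 0) *: (PP (incr_nth s' 0) * b 1 - b 1 * PP (incr_nth s' 0))
  = - (b 1 * (Cs s' *: PP s' - b 1 * (Cs s' *: PP s') * bs 1)).
Proof.
move=> n1 hs; rewrite !PP1 //.
set x := aa s' 1.
have ex : aa (incr_nth s' 0) 1 = x.+1 by rewrite /aa /= nth_incr_nth.
rewrite ex.
have h1 : (1 <= 1 <= n)%N by rewrite n1.
have [S1 S2 S3 S4] := site_facts _ h1.
rewrite -[bs 1 ^+ x.+1](mulr1 _) -[bs 1 ^+ x](mulr1 _).
apply: (@core1 Kq A (b 1) (bs 1) (b 1) (b 1 ^+ x.+1) (b 1 ^+ x) (bs 1 ^+ x.+1) (bs 1 ^+ x)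
   1 (bs 1 ^+ x * tq 1) _ _ (qq ^+ (2 * x.+1))).
- exact: commrX (commr_refl _).
- exact: commrX (commr_refl _).
- exact: commr1.
- exact: commr1.
- by rewrite -exprS.
- have := @T1 Kq A qq (b 1) (bs 1) (tq 1) S1 S2 S3 0 x.
  by rewrite !expr0 !mul1r.
- have := @T1' Kq A qq (b 1) (bs 1) (tq 1) S2 S3 0 x.
  by rewrite !expr0 !mul1r.
- by apply: Cs_incr; rewrite hs.
Qed.

Lemma term2_one s' : n = 1%N -> size s' = 1%N ->
  Cs (incr_nth s' 0) *: (PP (incr_nth s' 0) * bs 1 - bs 1 * PP (incr_nth s' 0))
  = (Cs s' *: PP s' - b 1 * (Cs s' *: PP s') * bs 1) * bs 1.
Proof.
move=> n1 hs; rewrite !PP1 //.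
set x := aa s' 1.
have ex : aa (incr_nth s' 0) 1 = x.+1 by rewrite /aa /= nth_incr_nth.
rewrite ex.
have h1 : (1 <= 1 <= n)%N by rewrite n1.
have [S1 S2 S3 S4] := site_facts _ h1.
rewrite -[b 1 ^+ x.+1 * bs 1 ^+ x.+1]mul1r -[b 1 ^+ x * bs 1 ^+ x]mul1r.
apply: (@core2 Kq A (b 1) (bs 1) (bs 1) 1 (b 1 ^+ x.+1) (b 1 ^+ x) (bs 1 ^+ x.+1) (bs 1 ^+ x)
   (tq 1 * b 1 ^+ x) _ _ (qq ^+ (2 * x.+1))).
- exact: commr1.
- exact: commrX (commr_refl _).
- exact: commr1.
- exact: commrX (commr_refl _).
- by rewrite -exprSr.
- have := @T2 Kq A qq (b 1) (bs 1) (tq 1) S1 S2 S4 x 0.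
  by rewrite !expr0 !mulr1.
- have := @T2' Kq A qq (b 1) (bs 1) (tq 1) S2 S4 x 0.
  by rewrite !expr0 !mulr1.
- by apply: Cs_incr; rewrite hs.
Qed.

Lemma zero1 j s : (1 <= j <= n)%N -> nth 0%N s (prv j).-1 = 0%N -> PP s * b j = b j * PP s.
Proof.
move=> hj h0; apply: esym; rewrite /PP big_seq; apply: commr_prod => i; rewrite inr => hi.
case: (i =P j) => [->|ij].
  rewrite /fac /aa h0 expr0 mulr1; exact: commrX (commr_refl _).
by apply: (comm_b_fac s _ _ hj hi _).1; apply/eqP => e; apply: ij.
Qed.

Lemma zero2 j s : (1 <= j <= n)%N -> nth 0%N s j.-1 = 0%N -> PP s * bs j = bs j * PP s.
Proof.
move=> hj h0; apply: esym; rewrite /PP big_seq; apply: commr_prod => i; rewrite inr => hi.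
case: (i =P j) => [->|ij].
  rewrite /fac /aa h0 expr0 mul1r; exact: commrX (commr_refl _).
by apply: (comm_b_fac s _ _ hj hi _).2; apply/eqP => e; apply: ij.
Qed.

Lemma mainL j : (1 <= j <= n)%N ->
  let Q := Qm n b bs in
  let jm := if j == 1%N then n else j.-1 in
  let jp := if j == n then 1%N else j.+1 in
  (forall r : nat,
     Q r * b j - b j * Q r
       = - shift1 (fun r' => b jm * (Q r' - b j * Q r' * bs j)) r)
  /\ (forall r : nat,
     Q r * bs j - bs j * Q r
       = shift1 (fun r' => (Q r' - b j * Q r' * bs j) * bs jp) r).
Proof.
move=> hj Q jm jp.
have sizes : forall r s, s \in comps n r -> size s = n.
  by move=> r s; rewrite mem_comps => /andP [/eqP].
have hpr := prv_range _ hj.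
split => r.
- have -> : Q r * b j - b j * Q r = \sum_(s <- comps n r) Cs s *: (PP s * b j - b j * PP s).
    rewrite /Q /Qm mulr_suml mulr_sumr -sumrB; apply: eq_bigr => s _.
    by rewrite Qterm_eq scalerBr scalerAl scalerAr.
  rewrite (@sum_shift _ (fun s' => - (b jm * (Qterm n b bs s' - b j * Qterm n b bs s' * bs j)))
     (prv j).-1 r).
  + case: r => [|r] /=; first by rewrite oppr0.
    rewrite /Q /Qm mulr_sumr mulr_suml -sumrB mulr_sumr -sumrN.
    by apply: eq_bigr.
  + by case/andP: hpr => h1 h2; lia.
  + by move=> s _ h0; rewrite zero1 // subrr scaler0.
  + move=> s' hs'; rewrite !Qterm_eq.
    have hs := sizes _ _ hs'.
    case: (ltnP 1 n) => n1; first exact: term1_big.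
    have en : n = 1%N by lia.
    have ej : j = 1%N by case/andP: hj; lia.
    have -> : jm = 1%N by rewrite /jm ej.
    rewrite ej /prv eqxx en /=; apply: term1_one => //; by rewrite hs.
- have -> : Q r * bs j - bs j * Q r = \sum_(s <- comps n r) Cs s *: (PP s * bs j - bs j * PP s).
    rewrite /Q /Qm mulr_suml mulr_sumr -sumrB; apply: eq_bigr => s _.
    by rewrite Qterm_eq scalerBr scalerAl scalerAr.
  rewrite (@sum_shift _ (fun s' => (Qterm n b bs s' - b j * Qterm n b bs s' * bs j) * bs jp)
     j.-1 r).
  + case: r => [|r] //=.
    rewrite /Q /Qm mulr_sumr mulr_suml -sumrB mulr_suml.
    by apply: eq_bigr.
  + by case/andP: hj => h1 h2; lia.
  + by move=> s _ h0; rewrite zero2 // subrr scaler0.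
  + move=> s' hs'; rewrite !Qterm_eq.
    have hs := sizes _ _ hs'.
    case: (ltnP 1 n) => n1; first exact: term2_big.
    have en : n = 1%N by lia.
    have ej : j = 1%N by case/andP: hj; lia.
    have -> : jp = 1%N by rewrite /jp ej en.
    rewrite ej /=; apply: term2_one => //; by rewrite hs.
Qed.
End Main.

Theorem mainTheorem9 (A : algType Kq) (n : nat) (hn : (0 < n)%N)
    (b bs qN qNi : nat -> A) (hrel : qboson_rel n b bs qN qNi)
    (j : nat) (hj : (1 <= j <= n)%N) :
  let Q := Qm n b bs in
  let jm := if j == 1%N then n else j.-1 in
  let jp := if j == n then 1%N else j.+1 in
  (forall r : nat,
     Q r * b j - b j * Q r
       = - shift1 (fun r' => b jm * (Q r' - b j * Q r' * bs j)) r)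
  /\ (forall r : nat,
     Q r * bs j - bs j * Q r
       = shift1 (fun r' => (Q r' - b j * Q r' * bs j) * bs jp) r).
Proof. exact: (@mainL A n b bs qN qNi hn hrel j hj). Qed.
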